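(* Let $N\ge1$, $\Gamma\in\{\Gamma_0(N),\Gamma_1(N)\}$, $k\in\mathbb{Z}$, $m\in\mathbb{Z}_{>0}$, and let $\varphi$ be a meromorphic Jacobi form of weight $k$ and index $m$ w.r.t. $\Gamma\ltimes\mathbb{Z}^2$ with (at most) double poles at $z=z_s=\alpha\tau+\beta$ for $s=(\alpha,\beta)\in S(\varphi)\subset\mathbb{Q}^2$. Then for all $\gamma=\begin{pmatrix}a&b\\c&d\end{pmatrix}\in\Gamma$: $E_s(\frac{a\tau+b}{c\tau+d})=(c\tau+d)^{k-2}E_{s\gamma}(\tau)$ and $D_s(\frac{a\tau+b}{c\tau+d})=(c\tau+d)^{k-1}D_{s\gamma}(\tau)$, where $s\gamma=(a\alpha+c\beta,b\alpha+d\beta)$.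
   Context: $\mathbf{e}(t)=e^{2\pi it}$. $\Gamma_0(N)$: $c\equiv0\bmod N$; $\Gamma_1(N)$: also $a\equiv d\equiv1\bmod N$. A meromorphic Jacobi form of weight $k$, index $m$ for $\Gamma\ltimes\mathbb{Z}^2$: meromorphic in $z$, weakly holomorphic in $\tau$, with $\varphi(\frac{a\tau+b}{c\tau+d},\frac z{c\tau+d})=(c\tau+d)^k\mathbf{e}(\frac{mcz^2}{c\tau+d})\varphi(\tau,z)$ for $\gamma\in\Gamma$ and $\varphi(\tau,z+\lambda\tau+\mu)=\mathbf{e}(-m(\lambda^2\tau+2\lambda z))\varphi(\tau,z)$ for $(\lambda,\mu)\in\mathbb{Z}^2$. $D_s,E_s$ are defined by $\mathbf{e}(m\alpha z_s)\varphi(\tau,z_s+\varepsilon)=\frac{E_s(\tau)}{(2\pi i\varepsilon)^2}+\frac{D_s(\tau)-2m\alpha E_s(\tau)}{2\pi i\varepsilon}+O(1)$ as $\varepsilon\to0$. *)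

(* Defs.v *)
From HB Require Import structures.
From mathcomp Require Import all_boot all_order all_algebra.
From mathcomp Require Import all_classical all_reals all_analysis.
From mathcomp Require Import complex.
Set Implicit Arguments. Unset Strict Implicit. Unset Printing Implicit Defensive.
Import Order.TTheory GRing.Theory Num.Theory.
Local Open Scope ring_scope.
Local Open Scope complex_scope.

Section Defs.
Variable R : realType.
Local Notation C := R[i].

(* e(t) = exp(2 pi i t) for complex t = x + i y : exp(-2 pi y) (cos 2 pi x + i sin 2 pi x) *)
Definition ee (t : C) : C :=
  (expR (- (2 * pi * complex.Im t)))%:C *
  ((cos (2 * pi * complex.Re t)) +i* (sin (2 * pi * complex.Re t))).

Definition twopii : C := (2 * pi)%:C * 'i.

Definition upper (t : C) : Prop := 0 < complex.Im t.

Definition cdiff (f : C -> C) (z : C) : Prop :=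
  exists l : C, forall e : R, 0 < e -> exists d : R, 0 < d /\
    forall h : C, h != 0 -> `|h| < d%:C -> `|(f (z + h) - f z) / h - l| < e%:C.

Definition zs (s : rat * rat) (tau : C) : C := ratr s.1 * tau + ratr s.2.

Definition poles (S : set (rat * rat)) (tau : C) (z : C) : Prop :=
  exists2 s, S s & z = zs s tau.

Inductive level := Gamma0 | Gamma1.

Definition inGamma (G : level) (N : nat) (a b c d : int) : Prop :=
  a * d - b * c = 1 /\ (N%:Z %| c)%Z /\
  (if G is Gamma1 then (a == 1 %[mod N%:Z])%Z /\ (d == 1 %[mod N%:Z])%Z else True).

Definition moebius (a b c d : int) (tau : C) : C :=
  (a%:~R * tau + b%:~R) / (c%:~R * tau + d%:~R).

Definition sact (s : rat * rat) (a b c d : int) : rat * rat :=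
  (a%:~R * s.1 + c%:~R * s.2, b%:~R * s.1 + d%:~R * s.2).

(* meromorphic Jacobi form of weight k, index m for Gamma |x Z^2, whose
   poles (in z) lie in { z_s(tau) | s in S }.  phi is a total function; its
   values at poles are irrelevant (laws only required off the poles). *)
Definition meromorphic_jacobi_form (G : level) (N : nat) (k : int) (m : nat)
    (S : set (rat * rat)) (phi : C -> C -> C) : Prop :=
  (forall tau, upper tau -> forall z, exists r : R, 0 < r /\
      forall w, poles S tau w -> w != z -> r%:C <= `|w - z|) /\
  (forall tau, upper tau -> forall z, ~ poles S tau z -> cdiff (phi tau) z) /\
  (forall tau, upper tau -> forall z, ~ poles S tau z ->
      cdiff (fun t => phi t z) tau) /\
  (forall a b c d, inGamma G N a b c d -> forall tau z, upper tau ->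
      ~ poles S tau z ->
      ~ poles S (moebius a b c d tau) (z / (c%:~R * tau + d%:~R)) ->
      phi (moebius a b c d tau) (z / (c%:~R * tau + d%:~R)) =
      (c%:~R * tau + d%:~R) ^ k *
        ee (m%:R * c%:~R * z ^+ 2 / (c%:~R * tau + d%:~R)) * phi tau z) /\
  (forall (lam mu : int) tau z, upper tau -> ~ poles S tau z ->
      ~ poles S tau (z + lam%:~R * tau + mu%:~R) ->
      phi tau (z + lam%:~R * tau + mu%:~R) =
      ee (- (m%:R * (lam%:~R ^+ 2 * tau + 2 * lam%:~R * z))) * phi tau z).

(* E_s(tau), D_s(tau) are the Laurent coefficients at z_s:
   e(m alpha z_s) phi(tau, z_s + eps)
     = E/(2 pi i eps)^2 + (D - 2 m alpha E)/(2 pi i eps) + O(1)  (eps -> 0). *)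
Definition laurent_ED (m : nat) (phi : C -> C -> C) (s : rat * rat) (tau : C)
    (E D : C) : Prop :=
  exists r : R, 0 < r /\ exists M : R, forall eps : C, eps != 0 -> `|eps| < r%:C ->
    `|ee (m%:R * ratr s.1 * zs s tau) * phi tau (zs s tau + eps)
           - E / (twopii * eps) ^+ 2
           - (D - 2 * m%:R * ratr s.1 * E) / (twopii * eps)| <= M%:C.

End Defs.

(* Main.v *)
Require Import Defs.
From HB Require Import structures.
From mathcomp Require Import all_boot all_order all_algebra.
From mathcomp Require Import all_classical all_reals all_analysis.
From mathcomp Require Import complex.
Import Order.TTheory GRing.Theory Num.Theory.
Local Open Scope ring_scope.
From mathcomp Require Import lra ring.

Section Main.
Variable R : realType.
Lemma taylor_bound (f df : R -> R) (L K : R) (n : nat) :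
  (forall x : R, is_derive x (1:R) f (df x)) -> f 0 = 0 -> 0 <= K ->
  (forall y, `|y| <= L -> `|df y| <= K * `|y| ^+ n) ->
  forall x, `|x| <= L -> `|f x| <= K * `|x| ^+ n.+1.
Proof.
move=> Hd f0 K0 Hb x HxL.
have key : forall c, `|c| <= `|x| -> `|df c * x| <= K * `|x| ^+ n.+1.
  move=> c Hc'; rewrite normrM exprS (mulrC `|x|) mulrA ler_wpM2r //.
  apply: le_trans (Hb c (le_trans Hc' HxL)) _.
  by rewrite ler_wpM2l // lerXn2r // ?nnegrE.
case: (leP 0 x) => Hx.
- have [|c Hc1 Heq] := MVT_segment Hx (fun z _ => Hd z).
    by apply: derivable_within_continuous => z _; exact: ex_derive.
  rewrite f0 subr0 subr0 in Heq; rewrite Heq; apply: key.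
  move: Hc1; rewrite in_itv /= => /andP [c0 cx].
  by rewrite !ger0_norm // (le_trans c0 cx).
- have [|c Hc1 Heq] := MVT_segment (ltW Hx) (fun z _ => Hd z).
    by apply: derivable_within_continuous => z _; exact: ex_derive.
  rewrite f0 sub0r add0r in Heq.
  have -> : f x = df c * x by rewrite -[f x]opprK Heq mulrN opprK.
  apply: key.
  move: Hc1; rewrite in_itv /= => /andP [xc c0].
  by rewrite !ler0_norm ?lerN2 // ltW.
Qed.


Lemma sqrA (x : R) : `|x| ^+ 2 = x ^+ 2.
Proof. exact: real_normK (num_real x). Qed.

Lemma real_bound (L : R) : 0 <= L -> exists K : R, 0 <= K /\ forall X Y : R,
  `|X| <= L -> `|Y| <= L ->
  `|expR X * cos Y - 1 - X| + `|expR X * sin Y - Y| <= K * (X ^+ 2 + Y ^+ 2).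
Proof.
move=> L0; set eL := expR L.
have eL0 : 0 <= eL by apply: ltW; apply: expR_gt0.
exists (2 * eL + 1 + 2 * L); split.
  by apply: addr_ge0; [apply: addr_ge0 => //; apply: mulr_ge0|apply: mulr_ge0].
move=> X Y HX HY.
have dE1 : forall x : R, is_derive x (1:R) (fun x => expR x - 1) (expR x).
  move=> x; have -> : expR x = expR x - 0 by rewrite subr0. exact: is_deriveB.
have dE2 : forall x : R, is_derive x (1:R) (fun x => expR x - 1 - x) (expR x - 1).
  move=> x; have -> : expR x - 1 = expR x - 0 - 1 by rewrite subr0. exact: is_deriveB.
have dC : forall x : R, is_derive x (1:R) (fun x => cos x - 1) (- sin x).
  move=> x; have -> : - sin x = - sin x - 0 by rewrite subr0. exact: is_deriveB.
have dS : forall x : R, is_derive x (1:R) (fun x => sin x - x) (cos x - 1).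
  move=> x; exact: is_deriveB.
have dS0 : forall x : R, is_derive x (1:R) sin (cos x).
  move=> x; exact: is_derive_sin.
have hE1 : forall X, `|X| <= L -> `|expR X - 1| <= eL * `|X| ^+ 1.
  move=> X0 HX0; apply: (@taylor_bound _ _ L eL 0 dE1 _ eL0 _ X0 HX0).
  - by rewrite expR0 subrr.
  - move=> y Hy; rewrite expr0 mulr1 ger0_norm ?ler_expR; last by apply: ltW; apply: expR_gt0.
    by apply: le_trans (ler_norm y) Hy.
have h2 := hE1 X HX.
have h1 : `|expR X - 1 - X| <= eL * `|X| ^+ 2.
  apply: (@taylor_bound _ _ L eL 1 dE2 _ eL0 _ X HX).
  - by rewrite expR0 !subrr.
  - by move=> y Hy; apply: hE1.
have h4 : forall Y : R, `|sin Y| <= 1 * `|Y| ^+ 1.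
  move=> y; apply: (@taylor_bound _ _ `|y| 1 0 dS0 (sin0 R) ler01 _ y (lexx `|y|)).
  by move=> z _; rewrite expr0 mulr1 cos_max.
have hC : forall Y : R, `|cos Y - 1| <= 1 * `|Y| ^+ 2.
  move=> y; apply: (@taylor_bound _ _ `|y| 1 1 dC _ ler01 _ y (lexx `|y|)).
  - by rewrite cos0 subrr.
  - by move=> z _; rewrite normrN.
have h3 := hC Y.
have h5 : `|sin Y - Y| <= 1 * `|Y| ^+ 3.
  apply: (@taylor_bound _ _ `|Y| 1 2 dS _ ler01 _ Y (lexx `|Y|)).
  - by rewrite sin0 subrr.
  - by move=> y _; apply: hC.
have Ere : expR X * cos Y - 1 - X = (expR X - 1 - X) * cos Y + (1 + X) * (cos Y - 1).
  by ring.
have Eim : expR X * sin Y - Y = (expR X - 1) * sin Y + (sin Y - Y).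
  by ring.
rewrite Ere Eim.
have r1 : `|(expR X - 1 - X) * cos Y| <= eL * X ^+ 2.
  rewrite normrM -sqrA; apply: le_trans (ler_piMr _ (cos_max Y)) h1.
  exact: normr_ge0.
have r2 : `|(1 + X) * (cos Y - 1)| <= (1 + L) * Y ^+ 2.
  rewrite normrM -sqrA; apply: ler_pM; rewrite ?normr_ge0 //;
  first [done | by apply: le_trans (ler_normD _ _) _; rewrite normr1 lerD2l | by move: h3; rewrite mul1r].
have r3 : `|(expR X - 1) * sin Y| <= eL * (`|X| * `|Y|).
  rewrite normrM mulrA; apply: ler_pM; rewrite ?normr_ge0 //;
  first [done | by move: h2; rewrite expr1 | by move: (h4 Y); rewrite expr1 mul1r].
have r4 : `|sin Y - Y| <= L * Y ^+ 2.
  rewrite -sqrA; apply: le_trans h5 _; rewrite mul1r exprS.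
  exact: (ler_wpM2r (sqr_ge0 _) HY).
have r5 : `|X| * `|Y| <= `|X| ^+ 2 + `|Y| ^+ 2.
  have := sqr_ge0 (`|X| - `|Y|); rewrite sqrrB => H.
  have hx := normr_ge0 X; have hy := normr_ge0 Y.
  move: H; set a := `|X| * `|Y|; set b := `|X| ^+ 2; set c := `|Y| ^+ 2.
  have hb : 0 <= b by apply: sqr_ge0.
  have hc : 0 <= c by apply: sqr_ge0.
  rewrite mulr2n; lra.
rewrite !sqrA in r5.
apply: le_trans (lerD (ler_normD _ _) (ler_normD _ _)) _.
have hx := sqr_ge0 X; have hy := sqr_ge0 Y.
have : eL * (`|X| * `|Y|) <= eL * (X ^+ 2 + Y ^+ 2) by apply: ler_wpM2l.
have : L * Y ^+ 2 >= 0 by apply: mulr_ge0.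
have : L * X ^+ 2 >= 0 by apply: mulr_ge0.
have : eL * Y ^+ 2 >= 0 by apply: mulr_ge0.
lra.
Qed.

Local Open Scope complex_scope.

Lemma sqrt_sum_le (a b : R) : Num.sqrt (a ^+ 2 + b ^+ 2) <= `|a| + `|b|.
Proof.
rewrite -(ger0_norm (addr_ge0 (normr_ge0 a) (normr_ge0 b))) -sqrtr_sqr ler_sqrt;
  last by apply: sqr_ge0.
rewrite sqrrD !sqrA; have : 0 <= `|a| * `|b| *+ 2.
  by apply: mulrn_wge0; apply: mulr_ge0.
lra.
Qed.

Lemma sq_le1 (q : R) : q ^+ 2 <= 1 -> `|q| <= 1.
Proof.
move=> H; rewrite -(@ler_pXn2r _ 2) ?nnegrE //.
by rewrite expr1n sqrA.
Qed.

Lemma ee_taylor : exists K : R, 0 <= K /\ forall w : R[i], `|w| <= 1 ->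
  `|ee w - 1 - twopii R * w| <= K%:C * `|w| ^+ 2.
Proof.
have pi0 : 0 <= 2 * pi :> R by apply: mulr_ge0 => //; exact: pi_ge0.
have [K [K0 HK]] := @real_bound _ pi0.
exists (K * (2 * pi) ^+ 2); split; first by apply: mulr_ge0 => //; exact: sqr_ge0.
move=> [p q] Hw.
have E : ee (p +i* q) - 1 - twopii R * (p +i* q) =
  (expR (- (2 * pi * q)) * cos (2 * pi * p) - 1 - (- (2 * pi * q))) +i*
  (expR (- (2 * pi * q)) * sin (2 * pi * p) - 2 * pi * p).
  by rewrite /ee /twopii /=; simpc.
rewrite E !normc_def /= in Hw *.
rewrite -rmorphXn -rmorphM lecR sqr_sqrtr; last by apply: addr_ge0; apply: sqr_ge0.
rewrite lecR -sqrtr1 ler_sqrt // in Hw.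
have hp : `|p| <= 1 by apply: sq_le1; have := sqr_ge0 q; lra.
have hq : `|q| <= 1 by apply: sq_le1; have := sqr_ge0 p; lra.
apply: le_trans (sqrt_sum_le _ _) _.
have HX : `|- (2 * pi * q)| <= 2 * pi.
  by rewrite normrN normrM (ger0_norm pi0) ler_piMr.
have HY : `|2 * pi * p| <= 2 * pi.
  by rewrite normrM (ger0_norm pi0) ler_piMr.
apply: le_trans (HK _ _ HX HY) _.
rewrite !exprMn sqrrN.
rewrite le_eqVlt; apply/orP; left; apply/eqP; ring.
Qed.

Lemma eeD (x y : R[i]) : ee (x + y) = ee x * ee y.
Proof.
case: x => [p q]; case: y => [p' q'].
rewrite /ee /=; simpc.
rewrite !mulrDr !opprD !expRD cosD sinD.
apply/eqP; rewrite eq_complex /=; apply/andP; split; apply/eqP; ring.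
Qed.

Lemma ee0 : ee (0 : R[i]) = 1.
Proof.
rewrite /ee /= !mulr0 oppr0 expR0 cos0 sin0; simpc; by [].
Qed.

Lemma eeN (x : R[i]) : ee (- x) * ee x = 1.
Proof. by rewrite -eeD addNr ee0. Qed.

Local Notation C := R[i].

Definition nc (x : C) : R := Num.sqrt (complex.Re x ^+ 2 + complex.Im x ^+ 2).
Lemma normE (x : C) : `|x| = (nc x)%:C.
Proof. exact: normc_def. Qed.
Lemma nc_ge0 (x : C) : 0 <= nc x.
Proof. exact: sqrtr_ge0. Qed.
Lemma normC_R (t : R) : `|t%:C| = `|t|%:C.
Proof. by rewrite normE /nc /= expr0n /= addr0 sqrtr_sqr. Qed.

Definition bnd (f : C -> C) : Prop :=
  exists r : R, 0 < r /\ exists M : R, forall e : C, e != 0 -> `|e| < r%:C -> `|f e| <= M%:C.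

Lemma bnd_M0 (f : C -> C) : bnd f -> exists r : R, 0 < r /\ exists M : R, 0 <= M /\
   forall e : C, e != 0 -> `|e| < r%:C -> `|f e| <= M%:C.
Proof.
move=> [r [r0 [M HM]]]; exists r; split => //; exists (Num.max M 0); split.
  by rewrite le_max lexx orbT.
move=> e e0 er; apply: le_trans (HM e e0 er) _; rewrite lecR le_max lexx //.
Qed.

Lemma ltC_min (e : C) (r1 r2 : R) : `|e| < (Num.min r1 r2)%:C -> `|e| < r1%:C /\ `|e| < r2%:C.
Proof. by rewrite !normE !ltcR lt_min => /andP. Qed.

Lemma bnd_const (c : C) : bnd (fun _ => c).
Proof. exists 1; split => //; exists (nc c) => e _ _; by rewrite normE. Qed.

Lemma bnd_id : bnd (fun e => e).
Proof. exists 1; split => //; exists 1 => e _ H; exact: ltW. Qed.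

Lemma bnd_add (f g : C -> C) : bnd f -> bnd g -> bnd (fun e => f e + g e).
Proof.
move=> [r1 [r10 [M1 H1]]] [r2 [r20 [M2 H2]]].
exists (Num.min r1 r2); split; first by rewrite lt_min r10 r20.
exists (M1 + M2) => e e0 /ltC_min [h1 h2].
apply: le_trans (ler_normD _ _) _; rewrite rmorphD; apply: lerD; [exact: H1|exact: H2].
Qed.

Lemma bnd_opp (f : C -> C) : bnd f -> bnd (fun e => - f e).
Proof.
move=> [r1 [r10 [M1 H1]]]; exists r1; split => //; exists M1 => e e0 h.
by rewrite normrN; apply: H1.
Qed.

Lemma bnd_sub (f g : C -> C) : bnd f -> bnd g -> bnd (fun e => f e - g e).
Proof. by move=> hf hg; apply: bnd_add => //; apply: bnd_opp. Qed.

Lemma bnd_mul (f g : C -> C) : bnd f -> bnd g -> bnd (fun e => f e * g e).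
Proof.
move=> /bnd_M0 [r1 [r10 [M1 [M10 H1]]]] /bnd_M0 [r2 [r20 [M2 [M20 H2]]]].
exists (Num.min r1 r2); split; first by rewrite lt_min r10 r20.
exists (M1 * M2) => e e0 /ltC_min [h1 h2].
rewrite normrM rmorphM; apply: ler_pM; rewrite ?normr_ge0 //; [exact: H1|exact: H2].
Qed.

Lemma bnd_ext (f g : C -> C) : (exists r : R, 0 < r /\ forall e, e != 0 -> `|e| < r%:C -> f e = g e) ->
  bnd g -> bnd f.
Proof.
move=> [r0 [r00 H0]] [r1 [r10 [M1 H1]]].
exists (Num.min r0 r1); split; first by rewrite lt_min r00 r10.
exists M1 => e e0 /ltC_min [h0 h1]; rewrite H0 //; exact: H1.
Qed.

Lemma rad_scale (A : C) (r : R) : A != 0 -> 0 < r -> exists r' : R, 0 < r' /\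
  forall e : C, `|e| < r'%:C -> `|A * e| < r%:C.
Proof.
move=> A0 r0; have nA : 0 < nc A.
  rewrite lt_neqAle nc_ge0 andbT; apply/eqP => H.
  by move: A0; rewrite -normr_eq0 normE -H eqxx.
exists (r / nc A); split; first exact: divr_gt0.
move=> e; rewrite normrM !normE -rmorphM !ltcR => H.
by rewrite mulrC -ltr_pdivlMr.
Qed.

Lemma bnd_scale (f : C -> C) (A : C) : A != 0 -> bnd f -> bnd (fun e => f (A * e)).
Proof.
move=> A0 [r [r0 [M H]]]; have [r' [r'0 Hr']] := @rad_scale A r A0 r0.
exists r'; split => //; exists M => e e0 he; apply: H; last exact: Hr'.
by rewrite mulf_neq0.
Qed.

Lemma small0R (a k d : R) : 0 <= a -> 0 < d -> (forall t, 0 < t -> t < d -> a <= k * t) -> a = 0.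
Proof.
move=> a0 d0 H; apply/eqP; rewrite eq_le a0 andbT; rewrite leNgt; apply/negP => ha.
have [k0|k0] := leP k 0.
  have := H (d / 2); rewrite divr_gt0 // ltr_pdivrMr // => /(_ isT).
  have : d < d * 2 by rewrite ltr_pMr // ltr1n.
  move=> -> /(_ isT); have : k * (d / 2) <= 0 by apply: mulr_le0_ge0 => //; apply: ltW; apply: divr_gt0.
  lra.
set t := Num.min (d / 2) (a / (2 * k)).
have t0 : 0 < t by rewrite lt_min !divr_gt0 // mulr_gt0.
have td : t < d.
  have htd : t <= d / 2 by rewrite ge_min lexx.
  apply: le_lt_trans htd _.
  by rewrite ltr_pdivrMr // ltr_pMr // ltr1n.
have := H t t0 td.
have : k * t <= k * (a / (2 * k)) by apply: ler_wpM2l; [exact: ltW| rewrite ge_min lexx orbT].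
have -> : k * (a / (2 * k)) = a / 2 by field; rewrite gt_eqF.
lra.
Qed.

Lemma small0 (x : C) (k d : R) : 0 < d -> (forall t, 0 < t -> t < d -> `|x| <= (k * t)%:C) -> x = 0.
Proof.
move=> d0 H; apply/normr0_eq0; rewrite normE.
have -> : nc x = 0; last by [].
apply: (@small0R (nc x) k d (nc_ge0 x) d0) => t t0 td; have := H t t0 td; by rewrite normE lecR.
Qed.


Lemma laurent0 (P Q : C) : bnd (fun e => P / e ^+ 2 + Q / e) -> P = 0 /\ Q = 0.
Proof.
move=> /bnd_M0 [r [r0 [M [M0 H]]]].
set d := Num.min r 1.
have d0 : 0 < d by rewrite lt_min r0 ltr01.
have key : forall t, 0 < t -> t < d -> `|P + Q * t%:C| <= (M * t ^+ 2)%:C.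
  move=> t t0 td.
  have e0 : t%:C != 0 by rewrite eq_complex /= negb_and (gt_eqF t0).
  have et : `|t%:C| < r%:C.
    by rewrite normC_R ltcR ger0_norm ?(ltW t0) //; move: td; rewrite lt_min => /andP [].
  have := H _ e0 et.
  have -> : P + Q * t%:C = t%:C ^+ 2 * (P / t%:C ^+ 2 + Q / t%:C) by field.
  move=> HH; rewrite normrM normrX normC_R (ger0_norm (ltW t0)) mulrC.
  have -> : (M * t ^+ 2)%:C = M%:C * t%:C ^+ 2 by rewrite rmorphM rmorphXn.
  by apply: ler_wpM2r => //; rewrite -rmorphXn lecR sqr_ge0.
have hQ : forall t, 0 < t -> `|Q * t%:C| = (nc Q * t)%:C.
  by move=> t t0; rewrite normrM normC_R normE (ger0_norm (ltW t0)) rmorphM.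
have P0 : P = 0.
  apply: (@small0 P (M + nc Q) d d0) => t t0 td.
  have -> : P = (P + Q * t%:C) - Q * t%:C by ring.
  apply: le_trans (ler_normB _ _) _.
  rewrite hQ //; apply: le_trans (lerD (key t t0 td) (lexx _)) _.
  rewrite -rmorphD lecR.
  have t1 : t <= 1 by apply: ltW; apply: lt_le_trans td _; rewrite ge_min lexx orbT.
  have : M * t * t <= M * t * 1 by apply: ler_wpM2l => //; apply: mulr_ge0 => //; exact: ltW.
  rewrite mulr1 -mulrA -expr2 mulrDl; lra.
split => //.
apply: (@small0 Q M d d0) => t t0 td.
have := key t t0 td; rewrite P0 add0r hQ // lecR => HH.
rewrite normE lecR -(@ler_pM2r _ t) // -mulrA -expr2; exact: HH.
Qed.

Lemma laurent_uniq (F : C -> C) (T k X0 Y0 X1 Y1 : C) : T != 0 ->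
  bnd (fun e => F e - X0 / (T * e) ^+ 2 - (Y0 - k * X0) / (T * e)) ->
  bnd (fun e => F e - X1 / (T * e) ^+ 2 - (Y1 - k * X1) / (T * e)) -> X0 = X1 /\ Y0 = Y1.
Proof.
move=> T0 h0 h1.
have h := @bnd_sub _ _ h1 h0.
have : bnd (fun e => ((X0 - X1) / T ^+ 2) / e ^+ 2 + (((Y0 - k * X0) - (Y1 - k * X1)) / T) / e).
  apply: bnd_ext h; exists 1; split => // e e0 _; field.
  by rewrite T0 e0.
move=> /laurent0 [HP HQ].
have HX : X0 = X1.
  apply/eqP; rewrite -subr_eq0; apply/eqP.
  by move/eqP: HP; rewrite mulf_eq0 invr_eq0 expf_eq0 (negbTE T0) andbF orbF => /eqP.
split => //; subst X1.
apply/eqP; rewrite -subr_eq0; apply/eqP.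
move/eqP: HQ; rewrite mulf_eq0 invr_eq0 (negbTE T0) orbF => /eqP HQ.
by rewrite -HQ; ring.
Qed.

Lemma intC (n : int) : (n%:~R : C) = (n%:~R : R)%:C.
Proof. by rewrite rmorph_int. Qed.

Lemma moebius_upper (a b c d : int) (tau : C) : a * d - b * c = 1 -> upper tau ->
  upper (moebius a b c d tau) /\ (c%:~R * tau + d%:~R != 0).
Proof.
move=> Hdet; case: tau => [x y]; rewrite /upper /moebius !intC /= => y0.
simpc.
have HR : (a%:~R * d%:~R - b%:~R * c%:~R : R) = 1.
  by rewrite -!intrM -intrB Hdet.
set q := c%:~R * x + d%:~R; set p := a%:~R * x + b%:~R.
have Hqp : a%:~R * q - c%:~R * p = 1.
  have -> : a%:~R * q - c%:~R * p = a%:~R * d%:~R - b%:~R * c%:~R :> R by rewrite /q /p; ring.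
  exact: HR.
have hn : 0 < q ^+ 2 + (c%:~R * y) ^+ 2.
  have [c0|c0] := eqVneq (c%:~R : R) 0.
    have q0 : q != 0.
      apply/eqP => q0; move: Hqp; rewrite q0 c0; rewrite mulr0 mul0r subr0 => /eqP.
      by rewrite eq_sym oner_eq0.
    have := sqr_ge0 (c%:~R * y); have : 0 < q ^+ 2 by rewrite lt_neqAle sqr_ge0 andbT eq_sym sqrf_eq0.
    lra.
  have : 0 < (c%:~R * y) ^+ 2 by rewrite lt_neqAle sqr_ge0 andbT eq_sym sqrf_eq0 mulf_neq0 // gt_eqF.
  have := sqr_ge0 q; lra.
split.
  have -> : - (p * (c%:~R * y / (q ^+ 2 + (c%:~R * y) ^+ 2))) +
     a%:~R * y * (q / (q ^+ 2 + (c%:~R * y) ^+ 2)) =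
     y * (a%:~R * q - c%:~R * p) / (q ^+ 2 + (c%:~R * y) ^+ 2).
    by field; rewrite (gt_eqF hn).
  rewrite Hqp mulr1.
  exact: divr_gt0.
rewrite eq_complex /= negb_and; apply/orP.
have [c0|c0] := eqVneq (c%:~R : R) 0.
  left; apply/eqP => q0; move: hn; rewrite [q]q0 c0 mul0r expr0n /= addr0 ltxx.
  done.
by right; rewrite mulf_neq0 // gt_eqF.
Qed.
Lemma bnd_sqr (f : C -> C) : bnd f -> bnd (fun e => f e ^+ 2).
Proof.
move=> h; apply: bnd_ext; last exact: (@bnd_mul f f h h).
by exists 1; split => // e _ _; rewrite expr2.
Qed.

Ltac bnd_tac := repeat first [ exact: bnd_const | assumption | exact: bnd_id
  | apply: bnd_sqr | apply: bnd_add | apply: bnd_mul | apply: bnd_opp ].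

Lemma final_bnd (Rf Q : C -> C) (G A T E' Y' m c z' : C) : bnd Rf -> bnd Q ->
  bnd (fun e => G * A^+2 * ((1 + T * (2 * m * c * z' * e + m * c * A * e^+2)) * Rf e + Q e * E'/(T * A)^+2
     + e * Q e * Y'/(T * A) + e^+2 * Q e * Rf e) + G * E' * m * c * A/T + G * A * Y' * (2 * m * c * z' + m * c * A * e)).
Proof. move=> hR hQ; bnd_tac. Qed.

Lemma key_id (G A T E' D' m c z' al al' e Qe Re : C) : A != 0 -> T != 0 -> e != 0 ->
  al + c * z' - al' * A = 0 ->
  G * A^+2 * (1 + T * (2 * m * c * z' * e + m * c * A * e^+2) + e^+2 * Qe) *
    (E'/(T * (A * e))^+2 + (D' - 2 * m * al' * E')/(T * (A * e)) + Re)
  - (G * E')/(T * e)^+2 - (G * A * D' - 2 * m * al * (G * E'))/(T * e)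
  = G * A^+2 * ((1 + T * (2 * m * c * z' * e + m * c * A * e^+2)) * Re + Qe * E'/(T * A)^+2
     + e * Qe * (D' - 2 * m * al' * E')/(T * A) + e^+2 * Qe * Re) + G * E' * m * c * A/T
     + G * A * (D' - 2 * m * al' * E') * (2 * m * c * z' + m * c * A * e).
Proof.
move=> A0 T0 e0 Hid.
have Hal : al = al' * A - c * z' by rewrite -[al]subr0 -Hid; ring.
rewrite Hal; field; by rewrite ?A0 ?T0 ?e0.
Qed.

Lemma bnd_ee (p q : C) :
  bnd (fun e => (ee (p * e + q * e ^+ 2) - 1 - twopii R * (p * e + q * e ^+ 2)) / e ^+ 2).
Proof.
have hw : bnd (fun e : C => p + q * e) by bnd_tac.
move: hw => /bnd_M0 [r1 [r10 [M1 [M10 H1]]]].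
have [K [K0 HK]] := ee_taylor.
have M1p : 0 < M1 + 1 by lra.
exists (Num.min r1 (1 / (M1 + 1))); split; first by rewrite lt_min r10 divr_gt0.
exists (K * M1 ^+ 2) => e e0 /ltC_min [h1 h2].
have Hw : `|p * e + q * e ^+ 2| <= `|e| * M1%:C.
  have -> : p * e + q * e ^+ 2 = e * (p + q * e) by ring.
  by rewrite normrM; apply: ler_wpM2l => //; apply: H1.
have Hw1 : `|p * e + q * e ^+ 2| <= 1.
  apply: le_trans Hw _; rewrite normE -rmorphM lecR.
  rewrite normE ltcR ltr_pdivlMr // in h2.
  have hn : 0 <= nc e by apply: nc_ge0.
  have : nc e * M1 <= nc e * (M1 + 1) by apply: ler_wpM2l => //; lra.
  lra.
have en : 0 < `|e| ^+ 2 by rewrite exprn_gt0 // normr_gt0.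
rewrite normf_div normrX ler_pdivrMr //.
apply: le_trans (HK _ Hw1) _.
apply: le_trans (_ : K%:C * (`|e| * M1%:C) ^+ 2 <= _).
  apply: ler_wpM2l; first by rewrite lecR.
  by apply: lerXn2r; rewrite ?nnegrE ?normr_ge0 // mulr_ge0 // lecR.
rewrite le_eqVlt; apply/orP; left; apply/eqP; rewrite exprMn rmorphM rmorphXn; ring.
Qed.

End Main.

Local Open Scope complex_scope.

Theorem proposition3p5 (R : realType) (G : level) (N : nat) (k : int) (m : nat)
    (S : set (rat * rat)) (phi : R[i] -> R[i] -> R[i])
    (E D : rat * rat -> R[i] -> R[i]) :
  (1 <= N)%N -> (0 < m)%N ->
  meromorphic_jacobi_form G N k m S phi ->
  (forall s tau, upper tau -> laurent_ED m phi s tau (E s tau) (D s tau)) ->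
  forall a b c d, inGamma G N a b c d ->
  forall s, S s -> forall tau, upper tau ->
    E s (moebius a b c d tau) = (c%:~R * tau + d%:~R) ^ (k - 2) * E (sact s a b c d) tau /\
    D s (moebius a b c d tau) = (c%:~R * tau + d%:~R) ^ (k - 1) * D (sact s a b c d) tau.
Proof.
move=> HN Hm [Hdisc [_ [_ [Hmod _]]]] HL a b c d Hg s Hs tau Hup.
have Hdet : a * d - b * c = 1 by case: Hg.
have [Hup' HA] := moebius_upper _ a b c d tau Hdet Hup.
set A := c%:~R * tau + d%:~R in HA *.
set tau' := moebius a b c d tau in Hup' *.
set s' := sact s a b c d.
have Hal' : (ratr s'.1 : R[i]) = a%:~R * ratr s.1 + c%:~R * ratr s.2.
  by rewrite /s' /sact /= rmorphD !rmorphM !rmorph_int.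
have Hbe' : (ratr s'.2 : R[i]) = b%:~R * ratr s.1 + d%:~R * ratr s.2.
  by rewrite /s' /sact /= rmorphD !rmorphM !rmorph_int.
have HdetC : (a%:~R * d%:~R - b%:~R * c%:~R : R[i]) = 1 by rewrite -!intrM -intrB Hdet.
have Hu : zs s tau' = zs s' tau / A.
  rewrite /zs /tau' /moebius Hal' Hbe' /A; field; exact: HA.
have Hid : ratr s.1 + c%:~R * zs s' tau - ratr s'.1 * A = 0.
  rewrite /zs Hal' Hbe' /A.
  have -> : forall al be : R[i], al + c%:~R * ((a%:~R * al + c%:~R * be) * tau + (b%:~R * al + d%:~R * be))
     - (a%:~R * al + c%:~R * be) * (c%:~R * tau + d%:~R) = al * (1 - (a%:~R * d%:~R - b%:~R * c%:~R))
    by move=> al be; ring.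
  by rewrite HdetC subrr mulr0.
have T0 : twopii R != 0.
  rewrite /twopii mulf_neq0 //; last by rewrite eq_complex /= negb_and oner_eq0 orbT.
  rewrite eq_complex /= negb_and; apply/orP; left; apply: mulf_neq0.
    by rewrite pnatr_eq0.
  by rewrite gt_eqF // pi_gt0.
have HL1 := HL s tau' Hup'.
have HL2 := HL s' tau Hup.
have [ra [ra0 Hra]] := Hdisc tau Hup (zs s' tau).
have [rb [rb0 Hrb]] := Hdisc tau' Hup' (zs s tau').
have [ra' [ra'0 Hra']] := rad_scale _ A ra HA ra0.
have HR := bnd_scale _ _ A HA HL2.
have HQ := bnd_ee _ (2 * m%:R * c%:~R * zs s' tau) (m%:R * c%:~R * A).
apply: (laurent_uniq _ (fun eps => ee (m%:R * ratr s.1 * zs s tau') * phi tau' (zs s tau' + eps))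
   (twopii R) (2 * m%:R * ratr s.1) (E s tau') (D s tau') (A ^ (k - 2) * E s' tau)
   (A ^ (k - 1) * D s' tau) T0 HL1).
apply: bnd_ext; last exact: (final_bnd _ _ _ (A ^ (k - 2)) A (twopii R) (E s' tau)
   (D s' tau - 2 * m%:R * ratr s'.1 * E s' tau) m%:R c%:~R (zs s' tau) HR HQ).
exists (Num.min ra' rb); split; first by rewrite lt_min ra'0 rb0.
move=> e e0 /ltC_min [h1 h2].
have hAe := Hra' e h1.
have Ae0 : A * e != 0 by rewrite mulf_neq0.
cbv beta.
have Hz : (zs s' tau + A * e) / A = zs s tau' + e by rewrite Hu; field.
have Hsub : zs s' tau + A * e - zs s' tau = A * e by ring.
have np1 : ~ poles S tau (zs s' tau + A * e).
  move=> Hp.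
  have Hne : zs s' tau + A * e != zs s' tau.
    by apply/eqP => H'; move: Ae0; rewrite -Hsub H' subrr eqxx.
  have := Hra _ Hp Hne; rewrite Hsub => H.
  by have := lt_le_trans hAe H; rewrite ltxx.
have np2 : ~ poles S tau' ((zs s' tau + A * e) / A).
  rewrite Hz => Hp.
  have Hne : zs s tau' + e != zs s tau'.
    by apply/eqP => H'; move: e0; rewrite -(addKr (zs s tau') e) H' addNr eqxx.
  have := Hrb _ Hp Hne; rewrite (addrC (zs s tau') e) addrK => H.
  by have := lt_le_trans h2 H; rewrite ltxx.
have Hphi : phi tau' (zs s tau' + e) = A ^ k * ee (m%:R * c%:~R * (zs s' tau + A * e) ^+ 2 / A)
   * phi tau (zs s' tau + A * e).
  by rewrite -Hz; exact: (Hmod a b c d Hg tau (zs s' tau + A * e) Hup np1 np2).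
set w := 2 * m%:R * c%:~R * zs s' tau * e + m%:R * c%:~R * A * e ^+ 2.
set Qe := (ee w - 1 - twopii R * w) / e ^+ 2.
set Re := ee (m%:R * ratr s'.1 * zs s' tau) * phi tau (zs s' tau + A * e)
   - E s' tau / (twopii R * (A * e)) ^+ 2
   - (D s' tau - 2 * m%:R * ratr s'.1 * E s' tau) / (twopii R * (A * e)).
have Hee : ee w = 1 + twopii R * w + e ^+ 2 * Qe by rewrite /Qe; field.
have HP : ee (m%:R * ratr s'.1 * zs s' tau) * phi tau (zs s' tau + A * e) =
   E s' tau / (twopii R * (A * e)) ^+ 2
   + (D s' tau - 2 * m%:R * ratr s'.1 * E s' tau) / (twopii R * (A * e)) + Re.
  by rewrite /Re; ring.
have Ak : A ^ k = A ^ (k - 2) * A ^+ 2.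
  by rewrite -[A ^+ 2]/(A ^ 2%:Z) -expfzDr // subrK.
have Ak1 : A ^ (k - 1) = A ^ (k - 2) * A.
  rewrite -[A in RHS]/(A ^ 1%:Z) -expfzDr //; congr (_ ^ _); ring.
have Hal : (ratr s.1 : R[i]) = ratr s'.1 * A - c%:~R * zs s' tau.
  by rewrite -[ratr s.1]subr0 -Hid; ring.
have Hexp : m%:R * ratr s.1 * zs s tau' + m%:R * c%:~R * (zs s' tau + A * e) ^+ 2 / A
   = w + m%:R * ratr s'.1 * zs s' tau.
  by rewrite Hu Hal /w; field.
have Hlhs : ee (m%:R * ratr s.1 * zs s tau') * phi tau' (zs s tau' + e) =
  A ^ (k - 2) * A ^+ 2 * (1 + twopii R * w + e ^+ 2 * Qe) *
  (E s' tau / (twopii R * (A * e)) ^+ 2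
   + (D s' tau - 2 * m%:R * ratr s'.1 * E s' tau) / (twopii R * (A * e)) + Re).
  rewrite -Hee -HP Hphi Ak.
  have -> : forall (x y g p : R[i]), x * (g * y * p) = g * (x * y) * p by move=> *; ring.
  by rewrite -(eeD R) Hexp (eeD R); ring.
rewrite Hlhs Ak1.
apply: (eq_trans _ (key_id _ (A ^ (k - 2)) A (twopii R) (E s' tau) (D s' tau) m%:R c%:~R
   (zs s' tau) (ratr s.1) (ratr s'.1) e Qe Re HA T0 e0 Hid)).
by [].
Qed.
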